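(* Let $A$ be an algebra whose commutator is commutative and distributive w.r.t. arbitrary joins and such that $[\theta,\nabla_A]_A=\theta$ for all $\theta\in\mathrm{Con}(A)$. Then $A$ is a Baer algebra if and only if $\theta^\perp\in\mathcal B(\mathrm{Con}(A))$ for every $\theta\in\mathcal K(A)$.
   Context: Let $A$ be an algebra of a fixed signature. $\mathrm{Con}(A)$ is the complete lattice of congruences of $A$, with bottom $\Delta_A$ and top $\nabla_A=A^2$; $\mathrm{PCon}(A)$ is the set of principal congruences and $\mathcal K(A)$ the set of finitely generated (compact) congruences of $A$. $[\cdot,\cdot]_A$ is the term condition commutator: for $\alpha,\beta,\mu\in\mathrm{Con}(A)$, $C(\alpha,\beta;\mu)$ means that for all $n,k$, every $(n+k)$-ary term $t$, all $(a_i,b_i)\in\alpha$ and $(c_j,d_j)\in\beta$: $(t(\bar a,\bar c),t(\bar a,\bar d))\in\mu$ iff $(t(\bar b,\bar c),t(\bar b,\bar d))\in\mu$; $[\alpha,\beta]_A=\bigcap\{\mu: C(\alpha,\beta;\mu)\}$. ''The commutator of $A$ is commutative and distributive w.r.t. arbitrary joins'' means $[\alpha,\beta]_A=[\beta,\alpha]_A$ and $[\bigvee_{i}\alpha_i,\beta]_A=\bigvee_{i}[\alpha_i,\beta]_A$ for all families. For $\beta\in\mathrm{Con}(A)$, $\beta^\perp=\bigvee\{\alpha\in\mathrm{Con}(A):[\alpha,\beta]_A=\Delta_A\}$. $\mathcal B(\mathrm{Con}(A))$ is the set of complemented elements of the lattice $\mathrm{Con}(A)$. $A$ is a Baer algebra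 iff $\theta^\perp\in\mathcal B(\mathrm{Con}(A))$ for all $\theta\in\mathrm{PCon}(A)$. *)

(* Defs.v *)
From Stdlib Require Import List Fin.

Set Implicit Arguments.

Record signature := Signature { op_sym : Type ; arity : op_sym -> nat }.

Record algebra (S : signature) := Algebra {
  carrier :> Type ;
  ops : forall f : op_sym S, (Fin.t (arity S f) -> carrier) -> carrier }.

Definition rel (T : Type) := T -> T -> Prop.

Section UA.
Context {S : signature} (A : algebra S).

Inductive term (V : Type) : Type :=
| Var : V -> term V
| App : forall f : op_sym S, (Fin.t (arity S f) -> term V) -> term V.

Fixpoint eval {V : Type} (v : V -> A) (t : term V) : A :=
  match t with
  | Var x => v x
  | App f ts => ops A f (fun i => eval v (ts i))
  end.

Definition releq (R R' : rel A) : Prop := forall x y, R x y <-> R' x y.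

Definition is_con (R : rel A) : Prop :=
  (forall x, R x x) /\ (forall x y, R x y -> R y x) /\
  (forall x y z, R x y -> R y z -> R x z) /\
  (forall (f : op_sym S) (u w : Fin.t (arity S f) -> A),
      (forall i, R (u i) (w i)) -> R (ops A f u) (ops A f w)).

Definition Delta : rel A := fun x y => x = y.
Definition Nabla : rel A := fun _ _ => True.

Definition Cg (R : rel A) : rel A :=
  fun x y => forall th, is_con th -> (forall u w, R u w -> th u w) -> th x y.

Definition joinF {I : Type} (al : I -> rel A) : rel A :=
  Cg (fun x y => exists i, al i x y).

Definition join2 (a b : rel A) : rel A := Cg (fun x y => a x y \/ b x y).
Definition meet2 (a b : rel A) : rel A := fun x y => a x y /\ b x y.

Definition TC (al be mu : rel A) : Prop :=
  forall (n k : nat) (t : term (Fin.t n + Fin.t k))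
         (a b : Fin.t n -> A) (c d : Fin.t k -> A),
    (forall i, al (a i) (b i)) -> (forall j, be (c j) (d j)) ->
    let ev (p : Fin.t n -> A) (q : Fin.t k -> A) :=
        eval (fun v => match v with inl i => p i | inr j => q j end) t in
    (mu (ev a c) (ev a d) <-> mu (ev b c) (ev b d)).

Definition comm (al be : rel A) : rel A :=
  fun x y => forall mu, is_con mu -> TC al be mu -> mu x y.

Definition perp (be : rel A) : rel A :=
  @joinF {al : rel A | is_con al /\ releq (comm al be) Delta} (@proj1_sig _ _).

Definition complemented (th : rel A) : Prop :=
  exists th', is_con th' /\ releq (meet2 th th') Delta /\ releq (join2 th th') Nabla.

Definition is_PCon (th : rel A) : Prop :=
  exists a b : A, releq th (Cg (fun x y => x = a /\ y = b)).

Definition is_KCon (th : rel A) : Prop :=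
  exists l : list (A * A), releq th (Cg (fun x y => In (x, y) l)).

Definition Baer : Prop := forall th, is_PCon th -> complemented (perp th).

Definition comm_commutative : Prop :=
  forall al be, is_con al -> is_con be -> releq (comm al be) (comm be al).

Definition comm_join_distributive : Prop :=
  forall (I : Type) (al : I -> rel A) (be : rel A),
    (forall i, is_con (al i)) -> is_con be ->
    releq (comm (joinF al) be) (joinF (fun i => comm (al i) be)).

End UA.

(* Main.v *)
Require Import Defs.
From Stdlib Require Import List Fin.
From Stdlib Require Import FunctionalExtensionality PropExtensionality.

Section Aux.
Context {S : signature} (A : algebra S).

Definition sub (R R' : rel A) : Prop := forall x y, R x y -> R' x y.

Lemma ext (R R' : rel A) : sub R R' -> sub R' R -> R = R'.
Proof.
  intros H1 H2. apply functional_extensionality; intro x.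
  apply functional_extensionality; intro y.
  apply propositional_extensionality; split; auto.
Qed.

Lemma releq_ext (R R' : rel A) : releq A R R' -> R = R'.
Proof. intro H. apply ext; intros x y; apply H. Qed.

Lemma Cg_con (R : rel A) : is_con A (Cg A R).
Proof.
  unfold Cg; repeat split.
  - intros x th Hth _. destruct Hth as (Hr & _). apply Hr.
  - intros x y H th Hth HR. pose proof Hth as (_ & Hs & _). apply Hs. apply H; auto.
  - intros x y z H1 H2 th Hth HR. pose proof Hth as (_ & _ & Ht & _).
    apply Ht with y; [apply H1|apply H2]; assumption.
  - intros f u w H th Hth HR. pose proof Hth as (_ & _ & _ & Hc). apply Hc. intro i. apply H; auto.
Qed.

Lemma Cg_incl (R : rel A) : sub R (Cg A R).
Proof. intros x y H th _ HR. apply HR, H. Qed.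

Lemma Cg_min (R th : rel A) : is_con A th -> sub R th -> sub (Cg A R) th.
Proof. intros Hth HR x y H. apply H; auto. Qed.

Lemma Cg_ext (R R' : rel A) : (forall x y, R x y <-> R' x y) -> Cg A R = Cg A R'.
Proof.
  intro H. apply ext; apply Cg_min; try apply Cg_con;
  intros x y Hxy; apply Cg_incl; apply H; auto.
Qed.

Lemma con_Delta : is_con A (Delta A).
Proof.
  unfold Delta; repeat split; intros; subst; auto.
  apply f_equal. apply functional_extensionality; auto.
Qed.

Lemma con_Nabla : is_con A (Nabla A).
Proof. unfold Nabla; repeat split; auto. Qed.



Lemma con_meet a b : is_con A a -> is_con A b -> is_con A (meet2 A a b).
Proof.
  intros (ra & sa & ta & ca) (rb & sb & tb & cb). unfold meet2.
  split; [|split; [|split]].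
  - intro x; split; [apply ra|apply rb].
  - intros x y [H1 H2]; auto.
  - intros x y z [H1 H2] [H3 H4]; eauto.
  - intros f u w H; split; [apply ca|apply cb]; intro i; apply H.
Qed.

Lemma eval_compat th : is_con A th -> forall V (v w : V -> A),
  (forall x, th (v x) (w x)) -> forall t, th (eval A v t) (eval A w t).
Proof.
  intros Hth V v w H t. induction t as [x | f ts IH]; simpl.
  - apply H.
  - destruct Hth as (_ & _ & _ & Hc). apply Hc. apply IH.
Qed.

Lemma TC_left al be : is_con A al -> TC A al be al.
Proof.
  intros Hal n k t a b c d Hab Hcd ev.
  assert (h1 : forall q, al (ev a q) (ev b q)).
  { intro q. unfold ev. apply eval_compat; auto. intros [i|j]; auto. apply (proj1 Hal). }
  pose proof Hal as (_ & Hs & Ht & _).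
  split; intro H.
  - apply Ht with (ev a c); [apply Hs, h1|]. apply Ht with (ev a d); auto.
  - apply Ht with (ev b c); [apply h1|]. apply Ht with (ev b d); auto.
Qed.

Lemma TC_right al be : is_con A be -> TC A al be be.
Proof.
  intros Hbe n k t a b c d Hab Hcd ev.
  assert (h1 : forall p, be (ev p c) (ev p d)).
  { intro p. unfold ev. apply eval_compat; auto. intros [i|j]; auto. apply (proj1 Hbe). }
  split; auto.
Qed.

Lemma comm_l al be : is_con A al -> sub (comm A al be) al.
Proof. intros H x y Hc. apply Hc; auto. apply TC_left; auto. Qed.

Lemma comm_r al be : is_con A be -> sub (comm A al be) be.
Proof. intros H x y Hc. apply Hc; auto. apply TC_right; auto. Qed.

Lemma comm_mono al al' be be' : sub al al' -> sub be be' ->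
  sub (comm A al be) (comm A al' be').
Proof.
  intros H1 H2 x y Hc mu Hmu HT. apply Hc; auto.
  intros n k t a b c d Hab Hcd. apply HT; auto.
Qed.

Lemma comm_refl al be x : comm A al be x x.
Proof. intros mu Hmu _. apply (proj1 Hmu). Qed.

Lemma Cg_cons a b l : Cg A (fun x y => In (x, y) ((a, b) :: l)) =
  join2 A (Cg A (fun x y => x = a /\ y = b)) (Cg A (fun x y => In (x, y) l)).
Proof.
  apply ext.
  - apply Cg_min; [apply Cg_con|]. intros u w [H|H].
    + inversion H; subst. apply Cg_incl. left. apply Cg_incl. auto.
    + apply Cg_incl. right. apply Cg_incl. exact H.
  - apply Cg_min; [apply Cg_con|]. intros u w [H|H]; revert u w H; apply Cg_min;
      try apply Cg_con; intros u w H; apply Cg_incl.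
    + destruct H; subst; left; reflexivity.
    + right; exact H.
Qed.

End Aux.

Section Main.
Context {S : signature} (A : algebra S)
  (Hcomm : comm_commutative A)
  (Hdist : comm_join_distributive A)
  (Hnabla : forall th, is_con A th -> releq A (comm A th (Nabla A)) th).

Lemma join_l a b : sub A a (join2 A a b).
Proof. intros x y H. apply Cg_incl. left; exact H. Qed.
Lemma join_r a b : sub A b (join2 A a b).
Proof. intros x y H. apply Cg_incl. right; exact H. Qed.

Lemma join2_joinF a b : join2 A a b = joinF A (fun i : bool => if i then a else b).
Proof.
  unfold join2, joinF. apply Cg_ext. intros x y; split.
  - intros [H|H]; [exists true|exists false]; exact H.
  - intros [[|] H]; [left|right]; exact H.
Qed.

Lemma comm_meet_sub a b : is_con A a -> is_con A b -> sub A (comm A a b) (meet2 A a b).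
Proof. intros Ha Hb x y H; split; [exact (comm_l A a b Ha x y H)|exact (comm_r A a b Hb x y H)]. Qed.

Lemma comm_join2_le a b c g : is_con A a -> is_con A b -> is_con A c -> is_con A g ->
  sub A (comm A a c) g -> sub A (comm A b c) g -> sub A (comm A (join2 A a b) c) g.
Proof.
  intros Ha Hb Hc Hg H1 H2 x y H. rewrite join2_joinF in H.
  assert (Hal : forall i : bool, is_con A (if i then a else b)) by (intros [|]; auto).
  apply (proj1 (Hdist bool (fun i : bool => if i then a else b) c Hal Hc x y)) in H.
  revert x y H. apply Cg_min; auto.
  intros u w [[|] Hi]; [apply H1|apply H2]; exact Hi.
Qed.

Lemma comm_join2_le_r a b c g : is_con A a -> is_con A b -> is_con A c -> is_con A g ->
  sub A (comm A c a) g -> sub A (comm A c b) g -> sub A (comm A c (join2 A a b)) g.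
Proof.
  intros Ha Hb Hc Hg H1 H2 x y H.
  apply (proj1 (Hcomm c (join2 A a b) Hc (Cg_con A _) x y)) in H.
  refine (comm_join2_le a b c g Ha Hb Hc Hg _ _ x y H).
  - intros u w Hu. apply H1. apply (proj1 (Hcomm a c Ha Hc u w)). exact Hu.
  - intros u w Hu. apply H2. apply (proj1 (Hcomm b c Hb Hc u w)). exact Hu.
Qed.

Lemma perp_con be : is_con A (perp A be).
Proof. apply Cg_con. Qed.

Lemma perp_le al be : is_con A al -> sub A (comm A al be) (Delta A) -> sub A al (perp A be).
Proof.
  intros Hal Hs x y H. unfold perp, joinF. apply Cg_incl.
  assert (Hr : releq A (comm A al be) (Delta A)).
  { intros u w; split; [apply Hs| intro e; unfold Delta in e; subst; apply comm_refl]. }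
  exists (exist _ al (conj Hal Hr)). exact H.
Qed.

Lemma perp_comm be : is_con A be -> sub A (comm A (perp A be) be) (Delta A).
Proof.
  intros Hbe x y H. unfold perp in H.
  assert (Hcons : forall i : {al : rel A | is_con A al /\ releq A (comm A al be) (Delta A)},
     is_con A (proj1_sig i)) by (intro i; exact (proj1 (proj2_sig i))).
  apply (proj1 (Hdist _ (@proj1_sig _ _) be Hcons Hbe x y)) in H.
  revert x y H. apply Cg_min; [apply con_Delta|].
  intros u w [[al [Hal Heq]] Hi]. apply (proj1 (Heq u w)). exact Hi.
Qed.

Lemma perp_join th1 th2 : is_con A th1 -> is_con A th2 ->
  perp A (join2 A th1 th2) = meet2 A (perp A th1) (perp A th2).
Proof.
  intros H1 H2. apply ext.
  - assert (HJ : is_con A (join2 A th1 th2)) by apply Cg_con.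
    intros x y H. split.
    + refine (perp_le _ th1 (perp_con _) _ x y H).
      intros u w Hu. apply (perp_comm _ HJ).
      refine (comm_mono A _ _ _ _ _ _ u w Hu); [intros p q Hp; exact Hp| apply join_l].
    + refine (perp_le _ th2 (perp_con _) _ x y H).
      intros u w Hu. apply (perp_comm _ HJ).
      refine (comm_mono A _ _ _ _ _ _ u w Hu); [intros p q Hp; exact Hp| apply join_r].
  - assert (HM : is_con A (meet2 A (perp A th1) (perp A th2)))
      by (apply con_meet; apply perp_con).
    apply (perp_le _ _ HM).
    apply (comm_join2_le_r th1 th2 _ _ H1 H2 HM (con_Delta A)).
    + intros x y H. apply (perp_comm th1 H1).
      refine (comm_mono A _ _ _ _ _ _ x y H); [intros u w Hu; exact (proj1 Hu) | intros u w Hu; exact Hu].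
    + intros x y H. apply (perp_comm th2 H2).
      refine (comm_mono A _ _ _ _ _ _ x y H); [intros u w Hu; exact (proj2 Hu) | intros u w Hu; exact Hu].
Qed.

Lemma compl_meet a a' b b' : is_con A a -> is_con A a' -> is_con A b -> is_con A b' ->
  sub A (meet2 A a a') (Delta A) -> sub A (Nabla A) (join2 A a a') ->
  sub A (meet2 A b b') (Delta A) -> sub A (Nabla A) (join2 A b b') ->
  complemented A (meet2 A a b).
Proof.
  intros Ha Ha' Hb Hb' Da Na Db Nb.
  assert (HM : is_con A (meet2 A a b)) by (apply con_meet; auto).
  assert (HJ' : is_con A (join2 A a' b')) by apply Cg_con.
  assert (HJ : is_con A (join2 A (meet2 A a b) (join2 A a' b'))) by apply Cg_con.
  assert (HN : sub A (Nabla A) (join2 A (meet2 A a b) (join2 A a' b'))).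
  { intros x y _.
    pose proof (proj2 (Hnabla _ (con_Nabla A) x y) I) as h0.
    pose proof (comm_mono A _ _ _ _ Na Nb x y h0) as h1.
    refine (comm_join2_le a a' (join2 A b b') _ Ha Ha' (Cg_con A _) HJ _ _ x y h1).
    - apply (comm_join2_le_r b b' a _ Hb Hb' Ha HJ).
      + intros u w Hu. apply join_l. exact (comm_meet_sub a b Ha Hb u w Hu).
      + intros u w Hu. apply join_r, join_r. exact (comm_r A a b' Hb' u w Hu).
    - apply (comm_join2_le_r b b' a' _ Hb Hb' Ha' HJ).
      + intros u w Hu. apply join_r, join_l. exact (comm_l A a' b Ha' u w Hu).
      + intros u w Hu. apply join_r, join_l. exact (comm_l A a' b' Ha' u w Hu). }
  assert (Hd : is_con A (meet2 A (meet2 A a b) (join2 A a' b'))) by (apply con_meet; auto).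
  assert (HD : sub A (meet2 A (meet2 A a b) (join2 A a' b')) (Delta A)).
  { intros x y H.
    pose proof (proj2 (Hnabla _ Hd x y) H) as h0.
    pose proof (comm_mono A _ _ _ _ (fun u w Hu => Hu) HN x y h0) as h1.
    refine (comm_join2_le_r (meet2 A a b) (join2 A a' b') _ _ HM HJ' Hd (con_Delta A) _ _ x y h1).
    - intros u w Hu.
      pose proof (comm_mono A _ (join2 A a' b') _ _ (fun p q Hp => proj2 Hp) (fun p q Hp => Hp) u w Hu) as h2.
      refine (comm_join2_le a' b' (meet2 A a b) _ Ha' Hb' HM (con_Delta A) _ _ u w h2).
      + intros p q Hp. apply Da. apply (comm_meet_sub a a' Ha Ha').
        apply (proj1 (Hcomm a' a Ha' Ha p q)).
        exact (comm_mono A _ _ _ _ (fun r s Hr => Hr) (fun r s Hr => proj1 Hr) p q Hp).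
      + intros p q Hp. apply Db. apply (comm_meet_sub b b' Hb Hb').
        apply (proj1 (Hcomm b' b Hb' Hb p q)).
        exact (comm_mono A _ _ _ _ (fun r s Hr => Hr) (fun r s Hr => proj2 Hr) p q Hp).
    - apply (comm_join2_le_r a' b' _ _ Ha' Hb' Hd (con_Delta A)).
      + intros u w Hu. apply Da. apply (comm_meet_sub a a' Ha Ha').
        exact (comm_mono A _ _ _ _ (fun p q Hp => proj1 (proj1 Hp)) (fun p q Hp => Hp) u w Hu).
      + intros u w Hu. apply Db. apply (comm_meet_sub b b' Hb Hb').
        exact (comm_mono A _ _ _ _ (fun p q Hp => proj2 (proj1 Hp)) (fun p q Hp => Hp) u w Hu). }
  exists (join2 A a' b'). split; [exact HJ'|split].
  - intros x y; split; [apply HD | intro e; unfold Delta in e; subst; apply (proj1 Hd)].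
  - intros x y; split; [intros _; exact I | intros _; apply HN; exact I].
Qed.

Lemma compl_sub th : complemented A th -> exists th', is_con A th' /\
  sub A (meet2 A th th') (Delta A) /\ sub A (Nabla A) (join2 A th th').
Proof.
  intros [th' [H1 [H2 H3]]]. exists th'. split; [exact H1|split].
  - intros x y H. apply (proj1 (H2 x y)). exact H.
  - intros x y H. apply (proj2 (H3 x y)). exact H.
Qed.

Lemma main_aux : Baer A <-> (forall th, is_KCon A th -> complemented A (perp A th)).
Proof.
  split.
  - intros HB th [l Hl]. apply releq_ext in Hl. subst th. induction l as [|[a b] l IH].
    + assert (HC : sub A (Cg A (fun x y => In (x, y) nil)) (Delta A)).
      { apply Cg_min; [apply con_Delta| intros u w []]. }
      exists (Delta A). split; [apply con_Delta|split].
      * intros x y; split; [intros [_ h]; exact h | intro e; unfold Delta in e; subst;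
          split; [apply (proj1 (perp_con _)) | reflexivity]].
      * intros x y; split; [intros _; exact I | intros _; apply join_l].
        refine (perp_le _ _ (con_Nabla A) _ x y I).
        intros u w Hu. apply HC. exact (comm_r A _ _ (Cg_con A _) u w Hu).
    + rewrite Cg_cons. rewrite perp_join by apply Cg_con.
      assert (HP : is_PCon A (Cg A (fun x y => x = a /\ y = b))).
      { exists a, b. intros x y; split; auto. }
      destruct (compl_sub _ (HB _ HP)) as [a' [Ha' [Da Na]]].
      destruct (compl_sub _ IH) as [b' [Hb' [Db Nb]]].
      apply (compl_meet _ a' _ b'); auto using perp_con.
  - intros HK th [a [b Hab]]. apply HK. exists ((a, b) :: nil).
    assert (E : Cg A (fun x y => x = a /\ y = b) = Cg A (fun x y => In (x, y) ((a, b) :: nil))).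
    { apply Cg_ext. intros x y; simpl; split.
      - intros [-> ->]; left; reflexivity.
      - intros [H|[]]; inversion H; auto. }
    rewrite (releq_ext A _ _ Hab), E. intros x y; split; auto.
Qed.

End Main.

Theorem mainTheorem5 (S : signature) (A : algebra S)
  (Hcomm : comm_commutative A)
  (Hdist : comm_join_distributive A)
  (Hnabla : forall th, is_con A th -> releq A (comm A th (Nabla A)) th) :
  Baer A <-> (forall th, is_KCon A th -> complemented A (perp A th)).
Proof. exact (main_aux A Hcomm Hdist Hnabla). Qed.
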